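(* Suppose $E_3\subset S=\mathrm{span}_{\mathbb{C}}\{I_1,\dots,I_m\}$, i.e. $a_k=b_k=0$ for all $k=m+1,\dots,n$. Then for every circle $C$ as described in the context, $\lambda:=\int_C\zeta^{-1}\,d\zeta=2\pi i$ (that is, $2\pi i$ times the unit of $\mathbb{A}_n^m$).
   Context: Fix natural numbers $m\le n$. $\mathbb{A}_n^m$ is a commutative associative algebra with unit over $\mathbb{C}$ with a basis $\{I_k\}_{k=1}^n$ satisfying: (1) for $r,s\in\{1,\dots,m\}$, $I_rI_s=0$ if $r\ne s$ and $I_rI_r=I_r$; (2) for $r,s\in\{m+1,\dots,n\}$, $I_rI_s=\sum_{k=\max\{r,s\}+1}^{n}\Upsilon^{s}_{r,k}I_k$ with constants $\Upsilon^s_{r,k}\in\mathbb{C}$; (3) for each $s\in\{m+1,\dots,n\}$ there is a unique $u_s\in\{1,\dots,m\}$ such that for $r\in\{1,\dots,m\}$, $I_rI_s=I_s$ if $r=u_s$ and $0$ otherwise. Unit $1=\sum_{u=1}^mI_u$; $\mathbb{A}_n^m=S\oplus_sN$ with $S=\mathrm{span}\{I_1,\dots,I_m\}$, $N=\mathrm{span}\{I_{m+1},\dots,I_n\}$. $f_u(\sum_k\lambda_kI_k)=\lambda_u$. Let $e_1=1$, $e_2=\sum_ka_kI_k$, $e_3=\sum_kb_kI_k$ ($a_k,b_k\in\mathbb{C}$) be linearly independent over $\mathbb{R}$; $\zeta=xe_1+ye_2+ze_3$ ($x,y,z\in\mathbb{R}$), $E_3$ their real span. Standing assumption: $f_u(E_3)=\mathbb{C}$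 for all $u=1,\dots,m$. $\zeta$ is non-invertible exactly when $(x,y,z)$ lies on one of the lines $L_u=\{x+y\,\mathrm{Re}\,a_u+z\,\mathrm{Re}\,b_u=0,\ y\,\mathrm{Im}\,a_u+z\,\mathrm{Im}\,b_u=0\}$. The circle: $C\subset E_3$ is $C=\{xe_1+ye_2+ze_3:(x,y,z)\in C'\}$ for a Euclidean circle $C'\subset\mathbb{R}^3$ of radius $R>0$ centered at the origin, such that for every $u$ the image $f_u(C)$ is a positively oriented closed Jordan curve in $\mathbb{C}$ bounding a domain containing $0$. Integral: for a Jordan rectifiable curve $\gamma$ and continuous $\Psi=\sum_k(U_k+iV_k)I_k$ on $\gamma_\zeta$, $\int_{\gamma_\zeta}\Psi d\zeta:=\sum_kI_k\int_\gamma(U_k+iV_k)dx+\sum_ke_2I_k\int_\gamma(U_k+iV_k)dy+\sum_ke_3I_k\int_\gamma(U_k+iV_k)dz$. *)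

(* Defs.v *)
From Stdlib Require Import Reals Lra Lia Arith Bool ClassicalEpsilon.
From Coquelicot Require Import Coquelicot.
Open Scope R_scope.
Local Open Scope bool_scope.

(* Elements of A_n^m are represented by their coordinates in the basis
   I_1..I_n: a function nat -> C, of which only indices 1..n are meaningful. *)
Definition elt := nat -> C.

Fixpoint csum (f : nat -> C) (N : nat) : C :=
  match N with
  | O => RtoC 0
  | S N' => Cplus (csum f N') (f N)
  end.

(* Coefficient of I_k in the product I_r I_s, given by rules (1)-(3) and
   commutativity.  Ups r s k stands for Upsilon^s_{r,k};  us s stands for u_s. *)
Definition prodI (n m : nat) (Ups : nat -> nat -> nat -> C) (us : nat -> nat)
  (r s k : nat) : C :=
  if Nat.leb r m then
    if Nat.leb s m then
      (if Nat.eqb r s && Nat.eqb k r then RtoC 1 else RtoC 0)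
    else (if Nat.eqb r (us s) && Nat.eqb k s then RtoC 1 else RtoC 0)
  else
    if Nat.leb s m then
      (if Nat.eqb s (us r) && Nat.eqb k r then RtoC 1 else RtoC 0)
    else (if Nat.ltb (Nat.max r s) k && Nat.leb k n then Ups r s k else RtoC 0).

Definition mul (n m : nat) Ups us (x y : elt) : elt :=
  fun k => csum (fun r => csum (fun s =>
             Cmult (Cmult (x r) (y s)) (prodI n m Ups us r s k)) n) n.

Definition unitA (m : nat) : elt :=
  fun k => if Nat.leb 1 k && Nat.leb k m then RtoC 1 else RtoC 0.

Definition eqA (n : nat) (x y : elt) : Prop :=
  forall k, (1 <= k <= n)%nat -> x k = y k.

Definition is_algebra (n m : nat) Ups us : Prop :=
  (forall s, (m < s <= n)%nat -> (1 <= us s <= m)%nat) /\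
  (forall x y, eqA n (mul n m Ups us x y) (mul n m Ups us y x)) /\
  (forall x y z, eqA n (mul n m Ups us (mul n m Ups us x y) z)
                        (mul n m Ups us x (mul n m Ups us y z))).

(* The inverse: an element w with x w = 1 (chosen by epsilon; it is unique
   whenever it exists). *)
Definition inv (n m : nat) Ups us (x : elt) : elt :=
  epsilon (inhabits (fun _ : nat => RtoC 0))
    (fun w => eqA n (mul n m Ups us x w) (unitA m)).

(* zeta = x e_1 + y e_2 + z e_3, with e_1 = 1, e_2 = sum a_k I_k, e_3 = sum b_k I_k *)
Definition zeta (m : nat) (a b : elt) (x y z : R) : elt :=
  fun k => Cplus (Cplus (Cmult (RtoC x) (unitA m k)) (Cmult (RtoC y) (a k)))
                 (Cmult (RtoC z) (b k)).

Definition lin_indep3 (n m : nat) (a b : elt) : Prop :=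
  forall x y z : R, eqA n (zeta m a b x y z) (fun _ => RtoC 0) ->
    x = 0 /\ y = 0 /\ z = 0.

Definition cint (f : R -> C) (a0 b0 : R) : C :=
  (RInt (fun t => Re (f t)) a0 b0, RInt (fun t => Im (f t)) a0 b0).

(* Integral  int_{gamma_zeta} Psi dzeta  along the closed curve
   t |-> (gx t, gy t, gz t), t in [0, 2 pi], where int_gamma F dx is the line
   integral  int_0^{2pi} F(gamma t) gx'(t) dt, etc. *)
Definition contour_int (n m : nat) Ups us (a b : elt)
  (Psi : R -> R -> R -> elt) (gx gy gz : R -> R) : elt :=
  let F := fun t => Psi (gx t) (gy t) (gz t) in
  let Jx : elt := fun k => cint (fun t => Cmult (F t k) (RtoC (Derive gx t))) 0 (2*PI) in
  let Jy : elt := fun k => cint (fun t => Cmult (F t k) (RtoC (Derive gy t))) 0 (2*PI) in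
  let Jz : elt := fun k => cint (fun t => Cmult (F t k) (RtoC (Derive gz t))) 0 (2*PI) in
  fun k => Cplus (Cplus (Jx k) (mul n m Ups us (zeta m a b 0 1 0) Jy k))
                 (mul n m Ups us (zeta m a b 0 0 1) Jz k).

Definition jordan (w : R -> C) : Prop :=
  (forall t, continuous w t) /\ w 0 = w (2*PI) /\
  (forall s t, 0 <= s < 2*PI -> 0 <= t < 2*PI -> w s = w t -> s = t).

Definition on_curve (w : R -> C) (z : C) : Prop :=
  exists t, 0 <= t <= 2*PI /\ w t = z.

Definition reach (w : R -> C) (z z' : C) : Prop :=
  exists p : R -> C, (forall s, continuous p s) /\ p 0 = z /\ p 1 = z' /\
    forall s, 0 <= s <= 1 -> ~ on_curve w (p s).

(* z lies in the bounded domain bounded by the curve *)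
Definition inside (w : R -> C) (z : C) : Prop :=
  ~ on_curve w z /\ exists M : R, forall z', reach w z z' -> Cmod z' <= M.

(* winding number of w around z equals 1 (via a continuous argument) *)
Definition winds_once (w : R -> C) (z : C) : Prop :=
  exists th : R -> R, (forall t, continuous th t) /\
    (forall t, 0 <= t <= 2*PI ->
       Cminus (w t) z = Cmult (RtoC (Cmod (Cminus (w t) z))) (cos (th t), sin (th t))) /\
    th (2*PI) - th 0 = 2*PI.

Definition pos_jordan_around0 (w : R -> C) : Prop :=
  jordan w /\ inside w (RtoC 0) /\ (forall z, inside w z -> winds_once w z).

(* Main.v *)
Require Import Defs.
From Stdlib Require Import Reals Lra Lia Arith Bool ZArith ClassicalEpsilon FunctionalExtensionality.
From Coquelicot Require Import Coquelicot.
Open Scope R_scope.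


Definition Xf (A B t : R) := A * cos t + B * sin t.
Definition Xd (A B t : R) := - A * sin t + B * cos t.
Definition Nf A1 B1 A2 B2 t := Xf A1 B1 t ^ 2 + Xf A2 B2 t ^ 2.

Lemma Xf_der A B t : is_derive (Xf A B) t (Xd A B t).
Proof. unfold Xf, Xd. auto_derive; auto. ring. Qed.

Lemma deriv0_const (F : R -> R) (T : R) :
  (forall t, 0 <= t <= T -> is_derive F t 0) -> 0 <= T -> F T = F 0.
Proof.
  intros H HT.
  assert (H1 : is_RInt (fun _ => 0) 0 T (minus (F T) (F 0))).
  { apply (is_RInt_derive F (fun _ => 0)).
    - intros x Hx. rewrite Rmin_left in Hx by lra. rewrite Rmax_right in Hx by lra. apply H; lra.
    - intros; apply continuous_const. }
  apply (is_RInt_unique (V:=R_CompleteNormedModule)) in H1. rewrite RInt_const in H1.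
  unfold minus, plus, opp in H1; simpl in H1. unfold scal in H1; simpl in H1.
  unfold mult in H1; simpl in H1. lra.
Qed.

Lemma d_zero (d : R -> R) (T : R) :
  (forall t, continuous d t) -> d 0 = 0 -> 0 <= T ->
  (forall t, 0 <= t <= T -> cos (d t) = 1) -> d T = 0.
Proof.
  intros Hc H0 HT Hcos.
  assert (Hc' : continuity d).
  { intro x. apply continuity_pt_filterlim. apply Hc. }
  destruct (Rtotal_order (d T) 0) as [Hl|[He|Hg]]; auto; exfalso.
  - set (v := Rmax (d T) (- PI)).
    destruct (IVT_gen d 0 T v Hc') as [s [Hs Hds]].
    { rewrite H0. unfold v. rewrite (Rmin_right 0 (d T)) by lra. rewrite (Rmax_left 0 (d T)) by lra.
      split. apply Rmax_l. apply Rmax_lub; [lra| pose proof PI_RGT_0; lra]. }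
    rewrite Rmin_left in Hs by lra. rewrite Rmax_right in Hs by lra.
    specialize (Hcos s Hs). rewrite Hds in Hcos.
    assert (Hv1 : - PI <= v) by apply Rmax_r.
    assert (Hv2 : v < 0) by (apply Rmax_lub_lt; [lra| pose proof PI_RGT_0; lra]).
    rewrite <- cos_neg in Hcos.
    pose proof (cos_decreasing_1 0 (- v)) as Hd.
    rewrite cos_0 in Hd. pose proof PI_RGT_0. assert (cos (-v) < 1) by (apply Hd; lra). lra.
  - set (v := Rmin (d T) PI).
    destruct (IVT_gen d 0 T v Hc') as [s [Hs Hds]].
    { rewrite H0. unfold v. rewrite (Rmin_left 0 (d T)) by lra. rewrite (Rmax_right 0 (d T)) by lra.
      split. apply Rmin_glb; [lra| pose proof PI_RGT_0; lra]. apply Rmin_l. }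
    rewrite Rmin_left in Hs by lra. rewrite Rmax_right in Hs by lra.
    specialize (Hcos s Hs). rewrite Hds in Hcos.
    assert (Hv1 : v <= PI) by apply Rmin_r.
    assert (Hv2 : 0 < v) by (apply Rmin_glb_lt; [lra| pose proof PI_RGT_0; lra]).
    pose proof (cos_decreasing_1 0 v) as Hd.
    rewrite cos_0 in Hd. pose proof PI_RGT_0. assert (cos v < 1) by (apply Hd; lra). lra.
Qed.

Definition gfun A1 B1 A2 B2 t :=
  (Xf A1 B1 t * Xd A2 B2 t - Xf A2 B2 t * Xd A1 B1 t) / Nf A1 B1 A2 B2 t.
Definition pfun A1 B1 A2 B2 t :=
  (Xf A1 B1 t * Xd A1 B1 t + Xf A2 B2 t * Xd A2 B2 t) / Nf A1 B1 A2 B2 t.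

Ltac unf := unfold gfun, pfun, Nf, Xf, Xd in *.

Lemma gfun_cont A1 B1 A2 B2 t : 0 < Nf A1 B1 A2 B2 t -> continuous (gfun A1 B1 A2 B2) t.
Proof.
  intro Hp.
  apply (ex_derive_continuous (K:=R_AbsRing) (V:=R_NormedModule)). unf.
  auto_derive. lra.
Qed.

Lemma pfun_cont A1 B1 A2 B2 t : 0 < Nf A1 B1 A2 B2 t -> continuous (pfun A1 B1 A2 B2) t.
Proof.
  intro Hp.
  apply (ex_derive_continuous (K:=R_AbsRing) (V:=R_NormedModule)). unf.
  auto_derive. lra.
Qed.

Definition Gf A1 B1 A2 B2 t := RInt (gfun A1 B1 A2 B2) 0 t.

Lemma Gf_der A1 B1 A2 B2 t : (forall t, 0 < Nf A1 B1 A2 B2 t) ->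
  is_derive (Gf A1 B1 A2 B2) t (gfun A1 B1 A2 B2 t).
Proof.
  intro Hp.
  apply is_derive_RInt with (a := 0).
  - apply filter_forall. intros b0. apply RInt_correct. apply ex_RInt_continuous.
    intros; apply gfun_cont; auto.
  - apply gfun_cont; auto.
Qed.

Lemma F1_der A1 B1 A2 B2 t : (forall t, 0 < Nf A1 B1 A2 B2 t) ->
  is_derive (fun t => (Xf A1 B1 t * cos (Gf A1 B1 A2 B2 t) + Xf A2 B2 t * sin (Gf A1 B1 A2 B2 t)) / sqrt (Nf A1 B1 A2 B2 t)) t 0.
Proof.
  intro Hpp. pose proof (Hpp t) as Hp. pose proof (Gf_der A1 B1 A2 B2 t Hpp) as HG.
  unfold Nf, Xf in Hp |- *.
  auto_derive.
  all: try solve [repeat split; try (exists (gfun A1 B1 A2 B2 t); apply HG);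
       try (apply Rgt_not_eq, sqrt_lt_R0); lra].
  replace (Derive (fun x => Gf A1 B1 A2 B2 x) t) with (gfun A1 B1 A2 B2 t)
      by (symmetry; apply is_derive_unique; exact HG).
    unf.
    set (G := Gf A1 B1 A2 B2 t) in *. set (cG := cos G). set (sG := sin G).
    set (c := cos t) in *. set (sn := sin t) in *.
    set (x := A1 * c + B1 * sn) in *. set (y := A2 * c + B2 * sn) in *.
    set (x' := - A1 * sn + B1 * c). set (y' := - A2 * sn + B2 * c).
    replace (A1 * (1 * - sn) + B1 * (1 * c)) with x' by (unfold x'; ring).
    replace (A2 * (1 * - sn) + B2 * (1 * c)) with y' by (unfold y'; ring).
    replace (x * (x * 1) + y * (y * 1)) with (x^2+y^2) by ring.
    set (s := sqrt _). assert (Hs : s * s = x^2+y^2).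
    { unfold s. rewrite sqrt_sqrt; lra. }
    assert (0 < s) by (apply sqrt_lt_R0; lra).
    clearbody s x y x' y' cG sG. 
    field_simplify; try lra. unfold Rdiv. apply Rmult_eq_0_compat_r.
    replace (s^2) with (x^2+y^2) by (rewrite <- Hs; ring). ring.
Qed.

Lemma F2_der A1 B1 A2 B2 t : (forall t, 0 < Nf A1 B1 A2 B2 t) ->
  is_derive (fun t => (Xf A2 B2 t * cos (Gf A1 B1 A2 B2 t) - Xf A1 B1 t * sin (Gf A1 B1 A2 B2 t)) / sqrt (Nf A1 B1 A2 B2 t)) t 0.
Proof.
  intro Hpp. pose proof (Hpp t) as Hp. pose proof (Gf_der A1 B1 A2 B2 t Hpp) as HG.
  unfold Nf, Xf in Hp |- *.
  auto_derive.
  all: try solve [repeat split; try (exists (gfun A1 B1 A2 B2 t); apply HG);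
       try (apply Rgt_not_eq, sqrt_lt_R0); lra].
  replace (Derive (fun x => Gf A1 B1 A2 B2 x) t) with (gfun A1 B1 A2 B2 t)
      by (symmetry; apply is_derive_unique; exact HG).
    unf.
    set (G := Gf A1 B1 A2 B2 t) in *. set (cG := cos G). set (sG := sin G).
    set (c := cos t) in *. set (sn := sin t) in *.
    set (x := A1 * c + B1 * sn) in *. set (y := A2 * c + B2 * sn) in *.
    set (x' := - A1 * sn + B1 * c). set (y' := - A2 * sn + B2 * c).
    replace (A1 * (1 * - sn) + B1 * (1 * c)) with x' by (unfold x'; ring).
    replace (A2 * (1 * - sn) + B2 * (1 * c)) with y' by (unfold y'; ring).
    replace (x * (x * 1) + y * (y * 1)) with (x^2+y^2) by ring.
    set (s := sqrt _). assert (Hs : s * s = x^2+y^2).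
    { unfold s. rewrite sqrt_sqrt; lra. }
    assert (0 < s) by (apply sqrt_lt_R0; lra).
    clearbody s x y x' y' cG sG. 
    field_simplify; try lra. unfold Rdiv. apply Rmult_eq_0_compat_r.
    replace (s^2) with (x^2+y^2) by (rewrite <- Hs; ring). ring.
Qed.

Lemma pfun_int A1 B1 A2 B2 : (forall t, 0 < Nf A1 B1 A2 B2 t) ->
  is_RInt (pfun A1 B1 A2 B2) 0 (2*PI) 0.
Proof.
  intro Hpp.
  assert (H := is_RInt_derive (fun t => ln (Nf A1 B1 A2 B2 t) / 2) (pfun A1 B1 A2 B2) 0 (2*PI)).
  cbv beta in H.
  assert (E : ln (Nf A1 B1 A2 B2 (2 * PI)) / 2 - ln (Nf A1 B1 A2 B2 0) / 2 = 0).
  { unfold Nf, Xf. rewrite cos_2PI, sin_2PI, cos_0, sin_0. ring. }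
  assert (H2 : is_RInt (pfun A1 B1 A2 B2) 0 (2 * PI)
          (ln (Nf A1 B1 A2 B2 (2 * PI)) / 2 - ln (Nf A1 B1 A2 B2 0) / 2)).
  { apply H.
    + intros t _. pose proof (Hpp t) as Hp. unf. auto_derive. lra. field. lra.
    + intros t _. apply pfun_cont; auto. }
  rewrite E in H2. exact H2.
Qed.

Lemma wind A1 B1 A2 B2 (th : R -> R) :
  (forall t, 0 < Nf A1 B1 A2 B2 t) -> (forall t, continuous th t) ->
  (forall t, 0 <= t <= 2*PI -> Xf A1 B1 t = sqrt (Nf A1 B1 A2 B2 t) * cos (th t) /\
                               Xf A2 B2 t = sqrt (Nf A1 B1 A2 B2 t) * sin (th t)) ->
  th (2*PI) - th 0 = 2*PI ->
  is_RInt (gfun A1 B1 A2 B2) 0 (2*PI) (2*PI).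
Proof.
  intros Hpp Hth Hpol Hw.
  pose proof PI_RGT_0 as Hpi.
  set (G := Gf A1 B1 A2 B2).
  assert (G0 : G 0 = 0) by (unfold G, Gf; apply (RInt_point (V:=R_CompleteNormedModule))).
  assert (Hcs : forall t, 0 <= t <= 2*PI -> cos (th t - G t) = cos (th 0) /\ sin (th t - G t) = sin (th 0)).
  { intros t Ht.
    pose proof (deriv0_const _ t (fun s Hs => F1_der A1 B1 A2 B2 s Hpp) (proj1 Ht)) as E1.
    pose proof (deriv0_const _ t (fun s Hs => F2_der A1 B1 A2 B2 s Hpp) (proj1 Ht)) as E2.
    simpl in E1, E2. fold G in E1, E2. rewrite G0, cos_0, sin_0 in E1, E2.
    destruct (Hpol t Ht) as [Hx Hy]. destruct (Hpol 0 ltac:(lra)) as [Hx0 Hy0].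
    assert (Hs : 0 < sqrt (Nf A1 B1 A2 B2 t)) by (apply sqrt_lt_R0; auto).
    assert (Hs0 : 0 < sqrt (Nf A1 B1 A2 B2 0)) by (apply sqrt_lt_R0; auto).
    rewrite Hx, Hy in E1, E2. rewrite Hx0, Hy0 in E1, E2.
    rewrite cos_minus, sin_minus. split.
    - replace (cos (th t) * cos (G t) + sin (th t) * sin (G t)) with
        ((sqrt (Nf A1 B1 A2 B2 t) * cos (th t) * cos (G t) + sqrt (Nf A1 B1 A2 B2 t) * sin (th t) * sin (G t)) / sqrt (Nf A1 B1 A2 B2 t)) by (field; lra).
      rewrite E1. field. lra.
    - replace (sin (th t) * cos (G t) - cos (th t) * sin (G t)) with
        ((sqrt (Nf A1 B1 A2 B2 t) * sin (th t) * cos (G t) - sqrt (Nf A1 B1 A2 B2 t) * cos (th t) * sin (G t)) / sqrt (Nf A1 B1 A2 B2 t)) by (field; lra).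
      rewrite E2. field. lra. }
  assert (HGc : forall t, continuous G t).
  { intro t. apply (ex_derive_continuous (K:=R_AbsRing) (V:=R_NormedModule)).
    exists (gfun A1 B1 A2 B2 t). apply Gf_der; auto. }
  assert (Hd : th (2*PI) - G (2*PI) - th 0 = 0).
  { apply (d_zero (fun t => th t - G t - th 0)).
    - intro t. apply (continuous_minus (K:=R_AbsRing) (V:=R_NormedModule)).
      apply (continuous_minus (K:=R_AbsRing) (V:=R_NormedModule)); auto.
      apply continuous_const.
    - simpl. rewrite G0. ring.
    - lra.
    - intros t Ht. simpl. replace (th t - G t - th 0) with ((th t - G t) - th 0) by ring.
      rewrite cos_minus. destruct (Hcs t Ht) as [-> ->].
      pose proof (sin2_cos2 (th 0)). unfold Rsqr in *. lra. }
  assert (HG2 : G (2*PI) = 2*PI) by lra.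
  assert (HI : is_RInt (gfun A1 B1 A2 B2) 0 (2*PI) (G (2*PI))).
  { unfold G, Gf. apply (RInt_correct (V:=R_CompleteNormedModule)).
    apply (ex_RInt_continuous (V:=R_CompleteNormedModule)).
    intros; apply gfun_cont; auto. }
  rewrite HG2 in HI. exact HI.
Qed.

Lemma csum_zero f N : (forall r, (1 <= r <= N)%nat -> f r = RtoC 0) -> csum f N = RtoC 0.
Proof.
  induction N; intros H; simpl. reflexivity.
  rewrite IHN by (intros; apply H; lia). rewrite H by lia.
  apply injective_projections; simpl; ring.
Qed.

Lemma csum_single f N r0 : (1 <= r0 <= N)%nat ->
  (forall r, (1 <= r <= N)%nat -> r <> r0 -> f r = RtoC 0) -> csum f N = f r0.
Proof.
  induction N; intros Hr H. lia. simpl.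
  destruct (Nat.eq_dec r0 (S N)) as [->|Hne].
  - rewrite csum_zero by (intros; apply H; lia). apply injective_projections; simpl; ring.
  - rewrite IHN by (try lia; intros; apply H; lia). rewrite (H (S N)) by lia.
    apply injective_projections; simpl; ring.
Qed.

Definition jidx (m : nat) (us : nat -> nat) (k : nat) := if Nat.leb k m then k else us k.

Lemma prodI_S n m Ups us r s k :
  (r <= m)%nat -> (1 <= k <= n)%nat -> (1 <= s)%nat ->
  (forall s, (m < s <= n)%nat -> (1 <= us s <= m)%nat) ->
  prodI n m Ups us r s k =
  if Nat.eqb s k && Nat.eqb r (jidx m us k) then RtoC 1 else RtoC 0.
Proof.
  intros Hr Hk Hs Hus. unfold prodI, jidx.
  destruct (Nat.leb_spec r m); [|lia].
  destruct (Nat.leb_spec s m); destruct (Nat.leb_spec k m);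
  destruct (Nat.eqb_spec s k); destruct (Nat.eqb_spec r s); destruct (Nat.eqb_spec k r);
  try destruct (Nat.eqb_spec r (us s)); try destruct (Nat.eqb_spec r (us k));
  try destruct (Nat.eqb_spec k s); try destruct (Nat.eqb_spec r k);
  simpl; subst; try reflexivity; try lia.
Qed.

Lemma mul_S n m Ups us (x y : elt) k :
  (forall s, (m < s <= n)%nat -> (1 <= us s <= m)%nat) ->
  (forall r, (m < r <= n)%nat -> x r = RtoC 0) -> (m <= n)%nat ->
  (1 <= k <= n)%nat ->
  mul n m Ups us x y k = Cmult (x (jidx m us k)) (y k).
Proof.
  intros Hus Hx Hmn Hk. unfold mul.
  assert (Hj : (1 <= jidx m us k <= m)%nat \/ (k <= m /\ jidx m us k = k)%nat).
  { unfold jidx. destruct (Nat.leb_spec k m). right; lia. left; apply Hus; lia. }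
  assert (Hj' : (1 <= jidx m us k <= n /\ jidx m us k <= m)%nat).
  { unfold jidx in *. destruct (Nat.leb_spec k m). lia. specialize (Hus k). lia. }
  rewrite (csum_single _ n (jidx m us k)).
  - rewrite (csum_single _ n k).
    2: lia.
    2: { intros s Hs Hne.
      rewrite prodI_S by (first [exact Hus | lia]). destruct (Nat.eqb_spec s k); [lia|].
      simpl; apply injective_projections; simpl; ring. }
    rewrite prodI_S by (first [exact Hus | lia]). rewrite Nat.eqb_refl, Nat.eqb_refl. simpl.
    apply injective_projections; simpl; ring.
  - lia.
  - intros r Hr Hne. apply csum_zero. intros s Hs.
    destruct (Nat.leb_spec r m).
    + rewrite prodI_S by (first [exact Hus | lia]). destruct (Nat.eqb_spec r (jidx m us k)); [lia|].
      rewrite andb_false_r. apply injective_projections; simpl; ring.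
    + rewrite Hx by lia. apply injective_projections; simpl; ring.
Qed.

Lemma unitA_val m k : (1 <= k)%nat -> unitA m k = if Nat.leb k m then RtoC 1 else RtoC 0.
Proof.
  intros Hk. unfold unitA. destruct (Nat.leb_spec 1 k); [|lia]. reflexivity.
Qed.

Lemma inv_S n m Ups us (x : elt) :
  (forall s, (m < s <= n)%nat -> (1 <= us s <= m)%nat) ->
  (forall r, (m < r <= n)%nat -> x r = RtoC 0) -> (m <= n)%nat ->
  (forall u, (1 <= u <= m)%nat -> x u <> RtoC 0) ->
  forall k, (1 <= k <= n)%nat ->
  inv n m Ups us x k = if Nat.leb k m then Cinv (x k) else RtoC 0.
Proof.
  intros Hus Hx Hmn Hnz.
  unfold inv. set (w := epsilon _ _).
  assert (Hw : eqA n (mul n m Ups us x w) (unitA m)).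
  { unfold w. apply epsilon_spec.
    exists (fun k => if Nat.leb k m then Cinv (x k) else RtoC 0).
    intros k Hk. rewrite mul_S by auto. rewrite unitA_val by lia. unfold jidx.
    destruct (Nat.leb_spec k m).
    - rewrite Cinv_r; auto. apply Hnz; lia.
    - apply Cmult_0_r. }
  intros k Hk. specialize (Hw k Hk). rewrite mul_S in Hw by auto.
  rewrite unitA_val in Hw by lia. unfold jidx in Hw.
  destruct (Nat.leb_spec k m).
  - assert (Hn : x k <> RtoC 0) by (apply Hnz; lia).
    replace (w k) with ((x k * w k) / x k)%C by (field; auto).
    rewrite Hw. field; auto.
  - assert (Hn : x (us k) <> RtoC 0) by (apply Hnz; apply Hus; lia).
    replace (w k) with ((x (us k) * w k) / x (us k))%C by (field; auto).
    rewrite Hw. field; auto.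
Qed.
Lemma period_red t : exists t', 0 <= t' <= 2*PI /\ cos t' = cos t /\ sin t' = sin t.
Proof.
  pose proof PI_RGT_0 as Hpi.
  set (z := Int_part (t / (2*PI))).
  destruct (base_Int_part (t/(2*PI))) as [H1 H2]. fold z in H1, H2.
  exists (t - 2 * IZR z * PI).
  assert (Ht1 : IZR z * (2*PI) <= t).
  { apply (Rmult_le_compat_r (2*PI)) in H1; [|lra]. unfold Rdiv in H1.
    rewrite Rmult_assoc, Rinv_l in H1 by lra. lra. }
  assert (Ht2 : t < IZR z * (2*PI) + 2*PI).
  { assert (t / (2*PI) < IZR z + 1) by lra.
    apply (Rmult_lt_compat_r (2*PI)) in H; [|lra]. unfold Rdiv in H.
    rewrite Rmult_assoc, Rinv_l in H by lra. lra. }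
  split; [lra|].
  destruct (Z_le_gt_dec 0 z) as [Hz|Hz].
  - replace z with (Z.of_nat (Z.to_nat z)) by lia. rewrite <- INR_IZR_INZ.
    set (k := Z.to_nat z).
    rewrite <- (cos_period (t - 2 * INR k * PI) k), <- (sin_period (t - 2 * INR k * PI) k).
    replace (t - 2 * INR k * PI + 2 * INR k * PI) with t by ring. auto.
  - replace z with (- Z.of_nat (Z.to_nat (- z)))%Z by lia. rewrite opp_IZR, <- INR_IZR_INZ.
    set (k := Z.to_nat (- z)).
    replace (t - 2 * - INR k * PI) with (t + 2 * INR k * PI) by ring.
    rewrite cos_period, sin_period. auto.
Qed.

Lemma cint_ext (f g : R -> C) a0 b0 : (forall t, f t = g t) -> cint f a0 b0 = cint g a0 b0.
Proof. intros H. replace f with g; auto. apply functional_extensionality; auto. Qed.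

Lemma RInt0 a0 b0 : RInt (fun _ => 0) a0 b0 = 0.
Proof.
  rewrite (RInt_const (V:=R_CompleteNormedModule)). unfold scal; simpl. unfold mult; simpl. ring.
Qed.

Lemma cint_zero (f : R -> C) a0 b0 : (forall t, f t = RtoC 0) -> cint f a0 b0 = RtoC 0.
Proof.
  intros H. rewrite (cint_ext f (fun _ => RtoC 0)) by auto. unfold cint. simpl.
  rewrite RInt0. reflexivity.
Qed.

Lemma cint_lin3 (f g h : R -> C) (al be : C) T :
  0 <= T ->
  (forall t, continuous (fun t => fst (f t)) t) -> (forall t, continuous (fun t => snd (f t)) t) ->
  (forall t, continuous (fun t => fst (g t)) t) -> (forall t, continuous (fun t => snd (g t)) t) ->
  (forall t, continuous (fun t => fst (h t)) t) -> (forall t, continuous (fun t => snd (h t)) t) ->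
  Cplus (Cplus (cint f 0 T) (Cmult al (cint g 0 T))) (Cmult be (cint h 0 T)) =
  cint (fun t => Cplus (Cplus (f t) (Cmult al (g t))) (Cmult be (h t))) 0 T.
Proof.
  intros HT H1 H2 H3 H4 H5 H6.
  assert (E : forall (u : R -> R), (forall t, continuous u t) -> ex_RInt u 0 T).
  { intros u Hu. apply (ex_RInt_continuous (V:=R_CompleteNormedModule)). intros; apply Hu. }
  destruct al as [ar ai], be as [br bi].
  unfold cint. simpl.
  assert (L : forall (u1 u2 u3 u4 u5 : R -> R) c2 c3 c4 c5,
    (forall t, continuous u1 t) -> (forall t, continuous u2 t) -> (forall t, continuous u3 t) ->
    (forall t, continuous u4 t) -> (forall t, continuous u5 t) ->
    RInt u1 0 T + c2 * RInt u2 0 T + c3 * RInt u3 0 T + c4 * RInt u4 0 T + c5 * RInt u5 0 T =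
    RInt (fun t => u1 t + c2 * u2 t + c3 * u3 t + c4 * u4 t + c5 * u5 t) 0 T).
  { intros u1 u2 u3 u4 u5 c2 c3 c4 c5 K1 K2 K3 K4 K5.
    assert (S : forall c (u : R -> R), (forall t, continuous u t) ->
      c * RInt u 0 T = RInt (fun t => c * u t) 0 T).
    { intros c u Ku. symmetry. apply (RInt_scal (V:=R_CompleteNormedModule)). apply E; auto. }
    assert (Cs : forall c (u : R -> R), (forall t, continuous u t) -> forall t, continuous (fun t => c * u t) t).
    { intros c u Ku t. apply (continuous_scal_r (K:=R_AbsRing) (V:=R_NormedModule) c u). apply Ku. }
    assert (P : forall (u v : R -> R), (forall t, continuous u t) -> (forall t, continuous v t) ->
      RInt u 0 T + RInt v 0 T = RInt (fun t => u t + v t) 0 T).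
    { intros u v Ku Kv. symmetry. apply (RInt_plus (V:=R_CompleteNormedModule)); apply E; auto. }
    assert (Cp : forall (u v : R -> R), (forall t, continuous u t) -> (forall t, continuous v t) ->
      forall t, continuous (fun t => u t + v t) t).
    { intros u v Ku Kv t. apply (continuous_plus (K:=R_AbsRing) (V:=R_NormedModule)); auto. }
    rewrite (S c2), (S c3), (S c4), (S c5) by auto.
    rewrite (P u1) by auto.
    rewrite (P (fun t => u1 t + c2 * u2 t)) by (try apply Cp; auto).
    rewrite (P (fun t => u1 t + c2 * u2 t + c3 * u3 t)) by (repeat apply Cp; auto).
    rewrite (P (fun t => u1 t + c2 * u2 t + c3 * u3 t + c4 * u4 t)) by (repeat apply Cp; auto).
    reflexivity. }
  unfold Cplus, Cmult, Re, Im; simpl. f_equal.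
  - replace (RInt (fun t => fst (f t)) 0 T + (ar * RInt (fun t => fst (g t)) 0 T - ai * RInt (fun t => snd (g t)) 0 T) +
       (br * RInt (fun t => fst (h t)) 0 T - bi * RInt (fun t => snd (h t)) 0 T)) with
      (RInt (fun t => fst (f t)) 0 T + ar * RInt (fun t => fst (g t)) 0 T + (- ai) * RInt (fun t => snd (g t)) 0 T +
       br * RInt (fun t => fst (h t)) 0 T + (- bi) * RInt (fun t => snd (h t)) 0 T) by ring.
    rewrite L by auto. apply (RInt_ext (V:=R_CompleteNormedModule)). intros. change (@eq R (fst (f x) + ar * fst (g x) + - ai * snd (g x) + br * fst (h x) + - bi * snd (h x)) (fst (f x) + (ar * fst (g x) - ai * snd (g x)) + (br * fst (h x) - bi * snd (h x)))). ring.
  - replace (RInt (fun t => snd (f t)) 0 T + (ar * RInt (fun t => snd (g t)) 0 T + ai * RInt (fun t => fst (g t)) 0 T) +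
       (br * RInt (fun t => snd (h t)) 0 T + bi * RInt (fun t => fst (h t)) 0 T)) with
      (RInt (fun t => snd (f t)) 0 T + ar * RInt (fun t => snd (g t)) 0 T + ai * RInt (fun t => fst (g t)) 0 T +
       br * RInt (fun t => snd (h t)) 0 T + bi * RInt (fun t => fst (h t)) 0 T) by ring.
    rewrite L by auto. apply (RInt_ext (V:=R_CompleteNormedModule)). intros. match goal with |- ?a = ?b => change (@eq R a b) end. ring.
Qed.

Definition fE A1 B1 A2 B2 P Q t := Cmult (Cinv (Xf A1 B1 t, Xf A2 B2 t)) (RtoC (Xd P Q t)).

Lemma fE_cont A1 B1 A2 B2 P Q : (forall t, 0 < Nf A1 B1 A2 B2 t) ->
  (forall t, continuous (fun t => fst (fE A1 B1 A2 B2 P Q t)) t) /\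
  (forall t, continuous (fun t => snd (fE A1 B1 A2 B2 P Q t)) t).
Proof.
  intros Hp. split; intro t; pose proof (Hp t) as H; unfold Nf, Xf in H;
  unfold fE, Cmult, Cinv, RtoC, Xf, Xd; simpl;
  apply (ex_derive_continuous (K:=R_AbsRing) (V:=R_NormedModule)); auto_derive; lra.
Qed.

Lemma polar_of (X Y c s : R) :
  Cminus (X, Y) (RtoC 0) = Cmult (RtoC (Cmod (Cminus (X, Y) (RtoC 0)))) (c, s) ->
  X = sqrt (X^2 + Y^2) * c /\ Y = sqrt (X^2 + Y^2) * s.
Proof.
  intros H.
  assert (Hm : Cmod (Cminus (X, Y) (RtoC 0)) = sqrt (X^2 + Y^2)).
  { unfold Cmod, Cminus, Cplus, Copp, RtoC; simpl. f_equal. ring. }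
  rewrite Hm in H.
  pose proof (f_equal fst H) as H1. pose proof (f_equal snd H) as H2.
  unfold Cminus, Cplus, Copp, Cmult, RtoC in H1, H2; simpl in H1, H2. replace (X*(X*1)+Y*(Y*1)) with (X^2+Y^2) in H1, H2 by ring. split; lra.
Qed.

Definition cA1 Rad p1 p2 p3 (a b : elt) u := Rad*p1 + Rad*p2*fst (a u) + Rad*p3*fst (b u).
Definition cA2 Rad p2 p3 (a b : elt) u := Rad*p2*snd (a u) + Rad*p3*snd (b u).

Theorem theorem9 (n m : nat) (Ups : nat -> nat -> nat -> C) (us : nat -> nat)
  (a b : nat -> C) :
  (1 <= m <= n)%nat ->
  is_algebra n m Ups us ->
  lin_indep3 n m a b ->
  (forall u, (1 <= u <= m)%nat -> forall c : C,
     exists x y z : R, zeta m a b x y z u = c) ->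
  (forall k, (m < k <= n)%nat -> a k = RtoC 0 /\ b k = RtoC 0) ->
  forall (Rad p1 p2 p3 q1 q2 q3 : R),
    0 < Rad ->
    p1*p1 + p2*p2 + p3*p3 = 1 -> q1*q1 + q2*q2 + q3*q3 = 1 ->
    p1*q1 + p2*q2 + p3*q3 = 0 ->
    let gx := fun t => Rad * (cos t * p1 + sin t * q1) in
    let gy := fun t => Rad * (cos t * p2 + sin t * q2) in
    let gz := fun t => Rad * (cos t * p3 + sin t * q3) in
    (forall u, (1 <= u <= m)%nat ->
       pos_jordan_around0 (fun t => zeta m a b (gx t) (gy t) (gz t) u)) ->
    eqA n (contour_int n m Ups us a b
             (fun x y z => inv n m Ups us (zeta m a b x y z)) gx gy gz)
          (fun k => Cmult (0, 2*PI) (unitA m k)).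
Proof.
  intros Hmn Halg Hli Hsurj HS Rad p1 p2 p3 q1 q2 q3 HR Hp Hq Hpq gx gy gz Hj.
  destruct Halg as [Hus _].
  pose proof PI_RGT_0 as Hpi.
  assert (ZS : forall x y z r, (m < r <= n)%nat -> zeta m a b x y z r = RtoC 0).
  { intros x y z r Hr. destruct (HS r Hr) as [Ha Hb]. unfold zeta. rewrite unitA_val by lia.
    destruct (Nat.leb_spec r m); [lia|]. rewrite Ha, Hb.
    apply injective_projections; simpl; ring. }
  set (A1 := cA1 Rad p1 p2 p3 a b). set (B1 := cA1 Rad q1 q2 q3 a b).
  set (A2 := cA2 Rad p2 p3 a b). set (B2 := cA2 Rad q2 q3 a b).
  assert (ZP : forall u t, (1 <= u <= m)%nat ->
    zeta m a b (gx t) (gy t) (gz t) u = (Xf (A1 u) (B1 u) t, Xf (A2 u) (B2 u) t)).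
  { intros u t Hu. unfold zeta. rewrite unitA_val by lia.
    destruct (Nat.leb_spec u m); [|lia].
    unfold A1, B1, A2, B2, cA1, cA2, Xf, gx, gy, gz.
    destruct (a u) as [ar ai], (b u) as [br bi].
    apply injective_projections; simpl; ring. }
  assert (NP : forall u t, (1 <= u <= m)%nat -> 0 < Nf (A1 u) (B1 u) (A2 u) (B2 u) t).
  { intros u t Hu.
    destruct (Hj u Hu) as [_ [[Hnot _] _]].
    destruct (period_red t) as [t' [Ht' [Hc Hs]]].
    assert (E : Nf (A1 u) (B1 u) (A2 u) (B2 u) t = Nf (A1 u) (B1 u) (A2 u) (B2 u) t').
    { unfold Nf, Xf. rewrite Hc, Hs. reflexivity. }
    rewrite E. unfold Nf.
    destruct (Rlt_or_le 0 (Xf (A1 u) (B1 u) t' ^ 2 + Xf (A2 u) (B2 u) t' ^ 2)) as [Hl|Hl]; auto.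
    exfalso. apply Hnot. exists t'. split; auto.
    rewrite ZP by auto.
    assert (Xf (A1 u) (B1 u) t' = 0) by nra. assert (Xf (A2 u) (B2 u) t' = 0) by nra.
    rewrite H, H0. reflexivity. }
  assert (NZ : forall t u, (1 <= u <= m)%nat -> zeta m a b (gx t) (gy t) (gz t) u <> RtoC 0).
  { intros t u Hu He. rewrite ZP in He by auto. pose proof (NP u t Hu) as Hn.
    unfold Nf in Hn. injection He as E1 E2. rewrite E1, E2 in Hn. lra. }
  assert (IV : forall t k, (1 <= k <= n)%nat ->
     inv n m Ups us (zeta m a b (gx t) (gy t) (gz t)) k =
     if Nat.leb k m then Cinv (zeta m a b (gx t) (gy t) (gz t) k) else RtoC 0).
  { intros t k Hk. apply inv_S; auto; try lia. }
  assert (Dx : forall t, Derive gx t = Xd (Rad*p1) (Rad*q1) t).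
  { intro t. apply is_derive_unique. unfold gx, Xd. auto_derive; auto. ring. }
  assert (Dy : forall t, Derive gy t = Xd (Rad*p2) (Rad*q2) t).
  { intro t. apply is_derive_unique. unfold gy, Xd. auto_derive; auto. ring. }
  assert (Dz : forall t, Derive gz t = Xd (Rad*p3) (Rad*q3) t).
  { intro t. apply is_derive_unique. unfold gz, Xd. auto_derive; auto. ring. }
  intros k Hk. unfold contour_int. cbv beta zeta.
  rewrite !mul_S by (first [exact Hus | lia | (intros; apply ZS; auto)]).
  unfold jidx. destruct (Nat.leb_spec k m).
  - assert (Hkm : (k <=? m) = true) by (apply Nat.leb_le; lia).
    assert (Hk' : (1 <= k <= m)%nat) by lia.
    rewrite (cint_ext (fun t => Cmult (inv n m Ups us (zeta m a b (gx t) (gy t) (gz t)) k) (RtoC (Derive gx t)))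
               (fE (A1 k) (B1 k) (A2 k) (B2 k) (Rad*p1) (Rad*q1)))
      by (intro t; rewrite IV, Hkm, ZP, Dx by auto; reflexivity).
    rewrite (cint_ext (fun t => Cmult (inv n m Ups us (zeta m a b (gx t) (gy t) (gz t)) k) (RtoC (Derive gy t)))
               (fE (A1 k) (B1 k) (A2 k) (B2 k) (Rad*p2) (Rad*q2)))
      by (intro t; rewrite IV, Hkm, ZP, Dy by auto; reflexivity).
    rewrite (cint_ext (fun t => Cmult (inv n m Ups us (zeta m a b (gx t) (gy t) (gz t)) k) (RtoC (Derive gz t)))
               (fE (A1 k) (B1 k) (A2 k) (B2 k) (Rad*p3) (Rad*q3)))
      by (intro t; rewrite IV, Hkm, ZP, Dz by auto; reflexivity).
    pose proof (NP k) as NPk.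
    assert (NPk' : forall t, 0 < Nf (A1 k) (B1 k) (A2 k) (B2 k) t) by (intro; apply NPk; auto).
    destruct (fE_cont (A1 k) (B1 k) (A2 k) (B2 k) (Rad*p1) (Rad*q1) NPk') as [C1 C2].
    destruct (fE_cont (A1 k) (B1 k) (A2 k) (B2 k) (Rad*p2) (Rad*q2) NPk') as [C3 C4].
    destruct (fE_cont (A1 k) (B1 k) (A2 k) (B2 k) (Rad*p3) (Rad*q3) NPk') as [C5 C6].
    rewrite cint_lin3 by (auto; lra).
    rewrite (cint_ext _ (fun t => (pfun (A1 k) (B1 k) (A2 k) (B2 k) t, gfun (A1 k) (B1 k) (A2 k) (B2 k) t))).
    + unfold cint; simpl.
      change (RInt (fun t => pfun (A1 k) (B1 k) (A2 k) (B2 k) t) 0 (2*PI)) with (RInt (pfun (A1 k) (B1 k) (A2 k) (B2 k)) 0 (2*PI)). change (RInt (fun t => gfun (A1 k) (B1 k) (A2 k) (B2 k) t) 0 (2*PI)) with (RInt (gfun (A1 k) (B1 k) (A2 k) (B2 k)) 0 (2*PI)). rewrite (is_RInt_unique (V:=R_CompleteNormedModule) _ _ _ _ (pfun_int _ _ _ _ NPk')).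
      destruct (Hj k Hk') as [_ [Hin Hw]]. destruct (Hw _ Hin) as [th [Hthc [Hpol Hth]]].
      assert (Hpol' : forall t, 0 <= t <= 2*PI ->
         Xf (A1 k) (B1 k) t = sqrt (Nf (A1 k) (B1 k) (A2 k) (B2 k) t) * cos (th t) /\
         Xf (A2 k) (B2 k) t = sqrt (Nf (A1 k) (B1 k) (A2 k) (B2 k) t) * sin (th t)).
      { intros t Ht. specialize (Hpol t Ht). cbv beta in Hpol. rewrite ZP in Hpol by auto.
        apply polar_of in Hpol. exact Hpol. }
      rewrite (is_RInt_unique (V:=R_CompleteNormedModule) _ _ _ _ (wind _ _ _ _ th NPk' Hthc Hpol' Hth)).
      rewrite unitA_val by lia. rewrite Hkm.
      apply injective_projections; simpl; ring.
    + intro t. specialize (NPk' t).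
      unfold zeta. rewrite !unitA_val by lia. rewrite Hkm.
      unfold fE, pfun, gfun, Nf, Xf, Xd, A1, B1, A2, B2, cA1, cA2 in *.
      destruct (a k) as [ar ai], (b k) as [br bi]. simpl in *.
      apply injective_projections; simpl; field; lra.
  - assert (Hkm : (k <=? m) = false) by (apply Nat.leb_gt; lia).
    rewrite !cint_zero by (intro t; rewrite IV, Hkm by auto; apply Cmult_0_l).
    rewrite unitA_val by lia. rewrite Hkm.
    apply injective_projections; simpl; ring.
Qed.
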